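(* Let $\mathcal{T}$ be an $l$-eligible microdata table and run the algorithm described in the context (arbitrary tie-breaking). If the algorithm terminates during Phase Two, then $|\ddot{R}| \le l\cdot h(\dot{R}) + l - 1$, where $\dot{R}$ is $R$ at the end of Phase One and $\ddot{R}$ is $R$ at termination.
   Context: A microdata table $\mathcal{T}$ is a multiset of $n$ tuples with values on $d$ quasi-identifier (QI) attributes and one sensitive attribute (SA). For a multiset $Q$ and SA value $v$, $h(Q,v)$ is the number of tuples in $Q$ with SA value $v$, $h(Q)=\max_v h(Q,v)$, pillars of $Q$ are the $v$ with $h(Q,v)=h(Q)$; $Q$ is $l$-eligible if $|Q|\ge l\cdot h(Q)$. Let $Q_1,\dots,Q_s$ be the maximal classes of tuples of $\mathcal{T}$ with identical values on all QI attributes; the algorithm only moves tuples from these groups into a set $R$ (initially empty). Phase One: for each $i$, while $Q_i$ is not $l$-eligible, move a tuple of a pillar of $Q_i$ to $R$; call the result $\dot{Q}_i,\dot{R}$; if $R$ is $l$-eligible, terminate. Phase Two terminology (w.r.t. current state): a group $Q$ is thin if $|Q|=l\cdot h(Q)$ and fat if $|Q|\ge l\cdot h(Q)+1$; $Q$ is conflicting if some pillar of $Q$ is a pillar of $R$; $Q$ is dead if thin and conflicting, alive otherwise; an SA value $v$ is alive if some alive group $Q$ has $h(Q,v)>0$. Phase Two iterates: if no SA value is alive, Phase Two ends (go to Phase Three). Otherwise pick an alive SA value $v$ minimizing $h(R,v)$ and an alive group $Q$ with $h(Q,v)>0$ (ties arbitrary); if $Q$ is fat move one tuple with SA value $v$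 from $Q$ to $R$; if $Q$ is thin move one tuple of each pillar of $Q$ to $R$. If $R$ is now $l$-eligible, the algorithm terminates. *)

(* Defs.v *)
(* Multisets of SA values are modelled as sequences
   (only multiplicities [count_mem] and [size] are ever used). *)
From mathcomp Require Import all_boot.
Set Implicit Arguments. Unset Strict Implicit. Unset Printing Implicit Defensive.

Section Anon.
Variables (V : eqType) (l : nat).

Definition hv (Q : seq V) (v : V) : nat := count_mem v Q.
Definition h (Q : seq V) : nat := \max_(v <- Q) hv Q v.
Definition pillar (Q : seq V) (v : V) : bool := (v \in Q) && (hv Q v == h Q).
Definition eligible (Q : seq V) : bool := l * h Q <= size Q.

Inductive phase1_group : seq V -> seq V -> seq V -> seq V -> Prop :=
| p1g_done Q R : eligible Q -> phase1_group Q R Q R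
| p1g_step Q R v Q' R' :
    ~~ eligible Q -> pillar Q v ->
    phase1_group (rem v Q) (v :: R) Q' R' -> phase1_group Q R Q' R'.

Inductive phase1 : seq (seq V) -> seq V -> seq (seq V) -> seq V -> Prop :=
| p1_nil R : phase1 [::] R [::] R
| p1_cons Q Qs R Q' R' Qs' R'' :
    phase1_group Q R Q' R' -> phase1 Qs R' Qs' R'' ->
    phase1 (Q :: Qs) R (Q' :: Qs') R''.

Definition thin (Q : seq V) : bool := size Q == l * h Q.
Definition fat (Q : seq V) : bool := l * h Q + 1 <= size Q.
Definition conflicting (Q R : seq V) : bool := has (fun v => pillar Q v && pillar R v) Q.
Definition dead (Q R : seq V) : bool := thin Q && conflicting Q R.
Definition alive (Q R : seq V) : bool := ~~ dead Q R.
Definition alive_value (Qs : seq (seq V)) (R : seq V) (v : V) : Prop :=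
  exists2 Q, Q \in Qs & alive Q R && (0 < hv Q v).

Definition rem_each (P Q : seq V) : seq V := foldr (fun p q => rem p q) Q P.
Definition pillars (Q : seq V) : seq V := undup (filter (pillar Q) Q).

Inductive phase2_step (Qs : seq (seq V)) (R : seq V) : seq (seq V) -> seq V -> Prop :=
| p2_fat v i :
    alive_value Qs R v ->
    (forall w, alive_value Qs R w -> hv R v <= hv R w) ->
    i < size Qs -> alive (nth [::] Qs i) R -> 0 < hv (nth [::] Qs i) v ->
    fat (nth [::] Qs i) ->
    phase2_step Qs R (set_nth [::] Qs i (rem v (nth [::] Qs i))) (v :: R)
| p2_thin v i :
    alive_value Qs R v ->
    (forall w, alive_value Qs R w -> hv R v <= hv R w) ->
    i < size Qs -> alive (nth [::] Qs i) R -> 0 < hv (nth [::] Qs i) v ->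
    thin (nth [::] Qs i) ->
    phase2_step Qs R (set_nth [::] Qs i (rem_each (pillars (nth [::] Qs i)) (nth [::] Qs i)))
      (pillars (nth [::] Qs i) ++ R).

(* phase2_terminates Qs R Rf : starting Phase Two from state (Qs, R), the
   algorithm performs iterations and terminates (R becomes l-eligible) during
   Phase Two, with final R equal to Rf. *)
Inductive phase2_terminates : seq (seq V) -> seq V -> seq V -> Prop :=
| p2t_stop Qs R Qs' R' :
    phase2_step Qs R Qs' R' -> eligible R' -> phase2_terminates Qs R R'
| p2t_cont Qs R Qs' R' Rf :
    phase2_step Qs R Qs' R' -> ~~ eligible R' ->
    phase2_terminates Qs' R' Rf -> phase2_terminates Qs R Rf.

End Anon.

(* QI-groups of a table T : seq (QI * SA), listed along an enumeration qs
   of the distinct QI values. *)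
Definition qi_group (QI V : eqType) (T : seq (QI * V)) (q : QI) : seq V :=
  [seq t.2 | t <- T & t.1 == q].

(* Main.v *)
Require Import Defs.
From mathcomp Require Import all_boot.
From mathcomp Require Import zify.
Set Implicit Arguments. Unset Strict Implicit.

Section S.
Variable V : eqType.

Lemma sumcount (P s : seq V) : uniq P ->
  count (mem P) s = \sum_(p <- P) count_mem p s.
Proof.
elim: P => [|p P IH] /=.
  by rewrite big_nil; elim: s => //= x s ->; rewrite in_nil.
move=> /andP [pP uP]; rewrite big_cons -IH //.
have := count_predUI (pred1 p) (mem P) s.
rewrite (@eq_count _ (predI (pred1 p) (mem P)) pred0); last first.
  by move=> x /=; apply/andP => -[/eqP -> ]; apply/negP.
rewrite count_pred0 addn0 => <-; apply: eq_count => x.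
by rewrite /= in_cons.
Qed.

Lemma L1 (P s : seq V) a : uniq P -> (forall p, p \in P -> a <= count_mem p s) ->
  size P * a <= size s.
Proof.
move=> uP H; apply: (@leq_trans (count (mem P) s)); last exact: count_size.
rewrite sumcount //.
elim: P uP H => [|p P IH] //= /andP[_ uP] H.
rewrite big_cons mulSn leq_add //; first by apply: H; rewrite in_cons eqxx.
by apply: IH => // q qP; apply: H; rewrite in_cons qP orbT.
Qed.

Lemma L2 (s : seq V) b : (forall w, w \in s -> count_mem w s <= b) ->
  size s <= size (undup s) * b.
Proof.
move=> H.
have -> : size s = count (mem (undup s)) s.
  by rewrite -(count_predT s); apply: eq_in_count => x /=; rewrite mem_undup => ->.
rewrite sumcount ?undup_uniq //.
have : forall w, w \in undup s -> count_mem w s <= b by move=> w; rewrite mem_undup; apply: H.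
elim: (undup s) => [|p P IH] /=; first by rewrite big_nil.
move=> H'; rewrite big_cons mulSn leq_add //; first by apply: H'; rewrite in_cons eqxx.
by apply: IH => q qP; apply: H'; rewrite in_cons qP orbT.
Qed.

Variable l : nat.

Lemma hv_le (Q : seq V) w : hv Q w <= h Q.
Proof.
case: (boolP (w \in Q)) => wQ; first by rewrite /h; apply: (@bigmaxn_sup_seq _ Q w xpredT).
by rewrite /hv (count_memPn wQ).
Qed.

Lemma h_le (Q : seq V) n : (forall w, w \in Q -> hv Q w <= n) -> h Q <= n.
Proof. by move=> H; apply/bigmax_leqP_seq => w wQ _; apply: H. Qed.

Lemma hv_gt0 (Q : seq V) w : (0 < hv Q w) = (w \in Q).
Proof. by rewrite /hv -has_count has_pred1. Qed.

Lemma h_cat (P R : seq V) : uniq P -> (forall p, p \in P -> hv R p < h R) ->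
  h (P ++ R) <= h R.
Proof.
move=> uP H; apply: h_le => w _; rewrite /hv count_cat.
case: (boolP (w \in P)) => wP.
  rewrite (count_uniq_mem _ uP) wP add1n; exact: H.
by rewrite (count_memPn wP) add0n; apply: hv_le.
Qed.

Lemma rem_each_count (P Q : seq V) w : uniq P -> {subset P <= Q} ->
  hv (rem_each P Q) w = hv Q w - (w \in P) /\ size (rem_each P Q) = size Q - size P.
Proof.
elim: P w => [|p P IH] w /=; first by move=> _ _; rewrite !subn0.
move=> /andP[pP uP] sub.
have sub' : {subset P <= Q} by move=> x xP; apply: sub; rewrite in_cons xP orbT.
have pQ : p \in Q by apply: sub; rewrite in_cons eqxx.
have pin : p \in rem_each P Q.
  rewrite -hv_gt0 (proj1 (IH p uP sub')) (negbTE pP) subn0 hv_gt0 //.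
split.
  rewrite /hv count_mem_rem -/(hv _ w) (proj1 (IH w uP sub')) in_cons -/(hv Q w).
  case: (boolP (p == w)) => [/eqP pw|npw].
    by subst p; rewrite eqxx (negbTE pP) /= !subn0.
  by rewrite (eq_sym w p) (negbTE npw) /= subn0.
rewrite size_rem // (proj2 (IH w uP sub')).
have : size P < size Q.
  have := @uniq_leq_size _ (p :: P) Q.
  by rewrite /= pP uP /=; apply.
lia.
Qed.


Lemma p1g_elig (Q R Q' R' : seq V) : phase1_group l Q R Q' R' -> eligible l Q'.
Proof. by elim. Qed.

Lemma p1_elig (Qs : seq (seq V)) R (Qs' : seq (seq V)) R' : phase1 l Qs R Qs' R' -> all (eligible l) Qs'.
Proof. by elim=> //= Q Qs0 R0 Q' R0' Qs0' R0'' /p1g_elig -> _ ->. Qed.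

Lemma all_set_nth (Qs : seq (seq V)) i Q' : i < size Qs -> all (eligible l) Qs ->
  eligible l Q' -> all (eligible l) (set_nth [::] Qs i Q').
Proof.
move=> iQ /all_nthP H eQ; apply/(all_nthP [::]) => j.
rewrite size_set_nth nth_set_nth /= => jlt.
have jlt' : j < size Qs by move: jlt iQ; rewrite /maxn; case: ifP => //; lia.
by case: (j == i); [exact eQ | exact: H].
Qed.

Lemma pillars_prop (Q : seq V) p : p \in pillars Q -> p \in Q /\ hv Q p = h Q.
Proof. by rewrite mem_undup mem_filter /pillar => /andP[/andP[_ /eqP ->] ->]. Qed.

Lemma step_ok (Qs : seq (seq V)) (R : seq V) Qs' R' : phase2_step l Qs R Qs' R' ->
  all (eligible l) Qs -> ~~ eligible l R ->
  [/\ all (eligible l) Qs', h R' <= h R & size R' <= size R + l].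
Proof.
have hR0 : forall R : seq V, ~~ eligible l R -> 0 < h R /\ 0 < l /\ size R < l * h R.
  move=> R0 H0; have : ~~ (l * h R0 <= size R0) := H0.
  rewrite -ltnNge => H; split; last split => //; lia.
case=> v i av Hmin il aQ vQ tQ Ha nR; have [hRp [lp sR]] := hR0 _ nR;
  set Q := nth [::] Qs i in aQ vQ tQ *;
  have QQs : Q \in Qs by apply: mem_nth.
  all: have eQ : eligible l Q by move/allP: Ha; apply.
  all: have vQ' : v \in Q by rewrite -hv_gt0.
  all: have hQp : 0 < h Q by apply: leq_trans vQ (hv_le _ _).
-
  have vlt : hv R v < h R.
    rewrite ltnNge; apply/negP => hge.
    have Hw : forall w, w \in undup Q -> h R <= hv R w.
      move=> w; rewrite mem_undup => wQ; apply: leq_trans hge (Hmin _ _).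
      by exists Q => //; rewrite aQ hv_gt0.
    have s1 := L1 (undup_uniq Q) Hw.
    have s2 : size Q <= size (undup Q) * h Q by apply: L2 => w _; apply: hv_le.
    move: eQ; rewrite /eligible => eQ.
    have su : size (undup Q) < l.
      by rewrite -(ltn_pmul2r hRp); apply: leq_ltn_trans s1 sR.
    have : l * h Q <= size (undup Q) * h Q by apply: leq_trans eQ s2.
    by rewrite leq_pmul2r // leqNgt su.
  split.
  + apply: all_set_nth => //; rewrite /eligible size_rem //.
    apply: (@leq_trans (l * h Q)); last by move: tQ; rewrite /fat; lia.
    by rewrite leq_mul2l; apply/orP; right; apply: h_le => w _; rewrite /hv count_mem_rem -/(hv Q w); apply: leq_trans (leq_subr _ _) (hv_le _ _).
  + by apply: (h_cat (P := [:: v])) => // p; rewrite in_cons in_nil orbF => /eqP ->.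
  + by rewrite /= -addn1 leq_add2l.
-
  have nc : ~~ conflicting Q R by move: aQ; rewrite /alive /dead tQ.
  have uP : uniq (pillars Q) by apply: undup_uniq.
  have subP : {subset pillars Q <= Q} by move=> p /pillars_prop [].
  have szP : size (pillars Q) <= l.
    have := L1 (a := h Q) uP (fun p pP => eq_leq (esym (proj2 (pillars_prop pP)))).
    move: tQ; rewrite /thin => /eqP -> H1.
    rewrite leq_pmul2r in H1 => //.
  split.
  + apply: all_set_nth => //; rewrite /eligible.
    rewrite (proj2 (rem_each_count v uP subP)).
    apply: (@leq_trans (l * (h Q).-1)).
      rewrite leq_mul2l; apply/orP; right; apply: h_le => w _.
      rewrite (proj1 (rem_each_count w uP subP)).
      case: (boolP (w \in pillars Q)) => wP.
        by have := hv_le Q w; rewrite /=; lia.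
      rewrite subn0.
      case: (boolP (w \in Q)) => wQ; last by rewrite /hv (count_memPn wQ).
      have : hv Q w != h Q.
        apply: contra wP => /eqP e; rewrite mem_undup mem_filter /pillar wQ e eqxx //=.
      move=> ne; have := hv_le Q w; rewrite leq_eqVlt (negbTE ne) /=; lia.
    have e : size Q = l * h Q by apply/eqP; exact: tQ.
    rewrite -subn1 mulnBr muln1; lia.
  + apply: h_cat => // p pP; have [pQ _] := pillars_prop pP.
    have pillQ : pillar Q p by move: pP; rewrite mem_undup mem_filter => /andP[].
    have : ~~ pillar R p by move/hasPn: nc => /(_ p pQ); rewrite pillQ.
    move=> np; case: (boolP (p \in R)) => pR; last by rewrite /hv (count_memPn pR).
    have ne : hv R p != h R by apply: contra np => e; rewrite /pillar pR e.
    by have := hv_le R p; rewrite leq_eqVlt (negbTE ne) orFb.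
  + by rewrite size_cat addnC leq_add2l.
Qed.

Lemma term_ok (Qs : seq (seq V)) (R : seq V) Rf : phase2_terminates l Qs R Rf ->
  all (eligible l) Qs -> ~~ eligible l R -> size Rf + 1 <= l * h R + l.
Proof.
elim=> [Qs0 R0 Qs' R' st _ | Qs0 R0 Qs' R' Rf0 st nR' _ IH] Ha nR;
  have [Ha' hle sz] := step_ok st Ha nR; move: nR; rewrite /eligible -ltnNge => nR.
  lia.
have := IH Ha' nR'; have : l * h R' <= l * h R0 by rewrite leq_mul2l hle orbT.
lia.
Qed.

End S.

Theorem lemma6 (QI V : eqType) (l : nat) (T : seq (QI * V)) (qs : seq QI)
  (Qs1 : seq (seq V)) (Rdot Rddot : seq V) :
  eligible l [seq t.2 | t <- T] ->
  perm_eq qs (undup [seq t.1 | t <- T]) ->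
  phase1 l [seq qi_group T q | q <- qs] [::] Qs1 Rdot ->
  ~~ eligible l Rdot ->
  phase2_terminates l Qs1 Rdot Rddot ->
  size Rddot + 1 <= l * h Rdot + l.
Proof.
move=> _ _ p1 nR p2; apply: term_ok p2 _ nR; exact: p1_elig p1.
Qed.
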